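(* Let $F$ be a field of characteristic zero and let $\mathrm{Gr}$ be the Grassmann (exterior) algebra over $F$ of a vector space $V$ with basis $e_1,\dots,e_n$ ($n\in\mathbb N$) or with countable basis $e_1,e_2,\dots$. Then every Rota–Baxter operator $R$ of nonzero weight $\lambda$ on $\mathrm{Gr}$ is splitting, and, up to replacing $R$ by $-R-\lambda\,\mathrm{id}$, we have $R(1)=0$.
   Context: A linear operator $R$ on an algebra $A$ is a Rota–Baxter operator of weight $\lambda$ if $R(x)R(y)=R(R(x)y+xR(y)+\lambda xy)$ for all $x,y\in A$. Such $R$ is splitting if $A=A_1\oplus A_2$ as vector spaces for subalgebras $A_1,A_2$ and $R(a_1+a_2)=-\lambda a_2$ for $a_i\in A_i$. *)

(* Defs.v *)
From HB Require Import structures.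
From mathcomp Require Import all_boot all_order all_algebra.
Set Implicit Arguments. Unset Strict Implicit. Unset Printing Implicit Defensive.
Import Order.TTheory GRing.Theory Num.Theory.
Local Open Scope ring_scope.

(* Basis vectors of V are e_0, e_1, ... (indexed by nat).  An element of the
   ambient space is a coefficient function x : seq nat -> F, where the value
   x s at a strictly increasing list s = [:: i_1 < ... < i_k] is the
   coefficient of the monomial e_{i_1} /\ ... /\ e_{i_k}  (s = [::] is 1).
   [gr_in b x] says x is an element of Gr:
     b = Some n : Gr of V with basis e_0..e_{n-1};
     b = None   : Gr of V with countable basis e_0, e_1, ...
   (x supported on strictly increasing lists, with entries bounded, which
   forces finite support). *)

Section Grassmann.
Variable F : fieldType.

Definition gr_in (b : option nat) (x : seq nat -> F) : Prop :=
  exists N : nat,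
    match b with Some n => (N <= n)%N | None => True end /\
    forall s, x s != 0 -> sorted ltn s /\ all (fun i => (i < N)%N) s.

Definition gr0 : seq nat -> F := fun _ => 0.
Definition gr1 : seq nat -> F := fun s => if s is [::] then 1 else 0.
Definition gr_add (x y : seq nat -> F) : seq nat -> F := fun s => x s + y s.
Definition gr_scale (a : F) (x : seq nat -> F) : seq nat -> F :=
  fun s => a * x s.

(* number of inversions of the shuffle given by m: pairs of positions i < j
   with position i going to the right factor and j to the left factor *)
Definition gr_inv (k : nat) (m : k.-tuple bool) : nat :=
  (\sum_(i < k) \sum_(j < k) ((i < j)%N && ~~ tnth m i && tnth m j))%N.

(* Grassmann product: e_S e_T = 0 if S, T meet, else sign * e_{S u T} *)
Definition gr_mul (x y : seq nat -> F) : seq nat -> F := fun s =>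
  if sorted ltn s then
    \sum_(m : (size s).-tuple bool)
       (-1) ^+ gr_inv m * x (mask m s) * y (mask (map negb m) s)
  else 0.

Definition is_RB (b : option nat) (lam : F)
  (R : (seq nat -> F) -> (seq nat -> F)) : Prop :=
  (forall x, gr_in b x -> gr_in b (R x)) /\
  (forall a x y, gr_in b x -> gr_in b y ->
     R (gr_add (gr_scale a x) y) = gr_add (gr_scale a (R x)) (R y)) /\
  (forall x y, gr_in b x -> gr_in b y ->
     gr_mul (R x) (R y) =
     R (gr_add (gr_add (gr_mul (R x) y) (gr_mul x (R y)))
               (gr_scale lam (gr_mul x y)))).

(* A is a (not necessarily unital) subalgebra of Gr *)
Definition is_subalg (b : option nat) (A : (seq nat -> F) -> Prop) : Prop :=
  (forall x, A x -> gr_in b x) /\ A gr0 /\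
  (forall a x y, A x -> A y -> A (gr_add (gr_scale a x) y)) /\
  (forall x y, A x -> A y -> A (gr_mul x y)).

Definition splitting (b : option nat) (lam : F)
  (R : (seq nat -> F) -> (seq nat -> F)) : Prop :=
  exists A1 A2 : (seq nat -> F) -> Prop,
    is_subalg b A1 /\ is_subalg b A2 /\
    (forall x, gr_in b x -> exists a1 a2, A1 a1 /\ A2 a2 /\ x = gr_add a1 a2) /\
    (forall x, A1 x -> A2 x -> x = gr0) /\
    (forall a1 a2, A1 a1 -> A2 a2 -> R (gr_add a1 a2) = gr_scale (- lam) a2).

End Grassmann.

(* Main.v *)
Require Import Defs.
From HB Require Import structures.
From mathcomp Require Import all_boot all_order all_algebra.
From mathcomp Require Import ring zify.
From Stdlib Require Import ClassicalEpsilon FunctionalExtensionality.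
Set Implicit Arguments. Unset Strict Implicit. Unset Printing Implicit Defensive.
Import Order.TTheory GRing.Theory Num.Theory.
Local Open Scope ring_scope.

Section PP.
Variable F : fieldType.
Hypothesis hF : [pchar F] =i pred0.

Lemma natr_inj (m n : nat) : (m%:R : F) = n%:R -> m = n.
Proof.
have H k : (k%:R : F) = 0 -> k = 0%N by move/eqP; rewrite ((pcharf0P _).1 hF) => /eqP.
wlog le : m n / (m <= n)%N.
  by move=> W E; case: (leqP m n) => h; [apply: W|symmetry; apply: W => //; apply: ltnW].
move=> E; have : ((n - m)%:R : F) = 0 by rewrite natrB // E subrr.
move/H => /eqP; rewrite subn_eq0 => h; apply/eqP; by rewrite eqn_leq le h.
Qed.

Definition T : {poly F} := 'X - 1%:P.
Definition Dl (u : {poly F}) : {poly F} := u - (u \Po T).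
Arguments Dl : simpl never.

Lemma size_T : size T = 2. Proof. by rewrite /T size_XsubC. Qed.

Lemma Dl_lin (c : F) (u v : {poly F}) : Dl (c *: u + v) = c *: Dl u + Dl v.
Proof. rewrite /Dl comp_polyD comp_polyZ scalerBr. by rewrite opprD addrACA. Qed.

Lemma Dl_add (u v : {poly F}) : Dl (u + v) = Dl u + Dl v.
Proof. by have := Dl_lin 1 u v; rewrite !scale1r. Qed.

Lemma Dl_C (c : F) : Dl c%:P = 0.
Proof. by rewrite /Dl comp_polyC subrr. Qed.

Lemma Dl_X (q : {poly F}) : Dl ('X * q) = 'X * Dl q + (q \Po T).
Proof. rewrite /Dl comp_polyM comp_polyX /T polyC1. ring. Qed.

Definition tailp (u : {poly F}) : {poly F} := \poly_(i < (size u).-1) u`_i.+1.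

Lemma decomp (u : {poly F}) : u = 'X * tailp u + (u`_0)%:P.
Proof.
apply/polyP => i; rewrite coefD coefXM coefC; case: i => [|k] //=.
  by rewrite add0r.
rewrite addr0 /tailp coef_poly; case: ltnP => // h.
by rewrite nth_default //; move: h; case: (size u).
Qed.

Lemma size_decomp (u : {poly F}) : (size (tailp u) <= (size u).-1)%N.
Proof. exact: size_poly. Qed.

Lemma compT_top (q : {poly F}) n : (size q <= n.+1)%N ->
  (size (q \Po T) <= n.+1)%N /\ (q \Po T)`_n = q`_n.
Proof.
move=> h; rewrite size_comp_poly2 ?size_T //; split => //.
case: (ltnP n (size q)) => h2.
  have e : size q = n.+1 by apply/eqP; rewrite eqn_leq h h2.
  have e2 : size (q \Po T) = n.+1 by rewrite size_comp_poly2 ?size_T.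
  have := lead_coef_comp q (_ : 1 < size T)%N; rewrite size_T => /(_ isT).
  rewrite /T lead_coefXsubC expr1n mulr1 !lead_coefE e e2 /=. by [].
by rewrite !nth_default // size_comp_poly2 ?size_T.
Qed.

Lemma Dl_main n : forall u : {poly F}, (size u <= n.+1)%N ->
  (size (Dl u) <= n)%N /\ (Dl u)`_n.-1 = n%:R * u`_n.
Proof.
elim: n => [|n IH] u hu.
  rewrite [u](size1_polyC hu).
  by rewrite Dl_C size_poly0 coef0 mul0r.
rewrite [u]decomp Dl_add Dl_C addr0 Dl_X.
set q := tailp u.
have hq : (size q <= n.+1)%N.
  by apply: (leq_trans (size_decomp u)); move: hu; case: (size u).
have [IH1 IH2] := IH q hq.
have [C1 C2] := compT_top hq.
split.
  apply: (leq_trans (size_polyD _ _)); rewrite geq_max C1 andbT.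
  apply: (leq_trans (size_polyMleq _ _)); rewrite size_polyX; change ((size (Dl q)).+1 <= n.+1)%N; by [].
rewrite /= coefD (coefXM (Dl q) n) C2 [in RHS]coefD (coefXM q) coefC /= addr0.
have -> : (if n == 0%N then 0 else (Dl q)`_n.-1) = n%:R * q`_n.
  by case: (n) IH2 => [|k] /=; [rewrite mul0r | move=> ->].
by rewrite -[in RHS]natr1 mulrDl mul1r.
Qed.

Lemma size_le_coef (r : {poly F}) n : (size r <= n.+1)%N -> r`_n = 0 -> (size r <= n)%N.
Proof.
move=> h1 h2; case: (ltnP n (size r)) => // h3.
have e : size r = n.+1 by apply/eqP; rewrite eqn_leq h1 h3.
have : lead_coef r == 0 by rewrite lead_coefE e h2.
by rewrite lead_coef_eq0 => /eqP r0; move: e; rewrite r0 size_poly0.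
Qed.

Lemma Dl_ex n : forall p : {poly F}, (size p <= n)%N ->
  exists u, [&& Dl u == p, u.[0] == 0 & (size u <= n.+1)%N].
Proof.
elim: n => [|n IH] p hp.
  move: hp; rewrite size_poly_leq0 => /eqP ->; exists 0.
  by rewrite /Dl comp_poly0 subrr horner0 size_poly0 !eqxx.
pose c := p`_n / (n.+1)%:R.
pose v := c *: 'X^(n.+1).
have hv : (size v <= n.+2)%N by apply: (leq_trans (size_scale_leq _ _)); rewrite size_polyXn.
have [D1 D2] := Dl_main hv.
have nz : (n.+1%:R : F) != 0 by rewrite ((pcharf0P _).1 hF).
have hp' : (size (p - Dl v)%R <= n)%N.
  apply: size_le_coef.
    apply: (leq_trans (size_polyD _ _)); rewrite geq_max hp size_polyN D1 //.
  rewrite coefB /= D2 /v coefZ coefXn eqxx mulr1 /c mulrC divfK // subrr //.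
have [w /and3P [/eqP W1 /eqP W2 W3]] := IH _ hp'.
exists (v + w); rewrite Dl_add W1 addrC subrK eqxx /=.
rewrite hornerD W2 addr0 /v hornerZ hornerXn expr0n /= mulr0 eqxx /=.
apply: (leq_trans (size_polyD _ _)); rewrite geq_max hv /=.
by apply: (leq_trans W3).
Qed.

Lemma Dl_ex_all (p : {poly F}) : exists u, [&& Dl u == p, u.[0] == 0 & (size u <= (size p).+1)%N].
Proof. exact: Dl_ex. Qed.

Definition Sop (p : {poly F}) : {poly F} := xchoose (Dl_ex_all p).

Lemma S_spec (p : {poly F}) : [&& Dl (Sop p) == p, (Sop p).[0] == 0 & (size (Sop p) <= (size p).+1)%N].
Proof. exact: (xchooseP (Dl_ex_all p)). Qed.

Lemma SD (p : {poly F}) : Dl (Sop p) = p. Proof. by case/and3P: (S_spec p) => /eqP. Qed.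
Lemma S0 (p : {poly F}) : (Sop p).[0] = 0. Proof. by case/and3P: (S_spec p) => _ /eqP. Qed.
Lemma Ssize (p : {poly F}) : (size (Sop p) <= (size p).+1)%N. Proof. by case/and3P: (S_spec p). Qed.

Lemma Dl_uniq (u : {poly F}) : Dl u = 0 -> u.[0] = 0 -> u = 0.
Proof.
move=> D u0.
have Hk k : u.[k%:R] = 0.
  elim: k => // k IHk.
  have : (u \Po T).[k.+1%:R] = u.[k.+1%:R].
    by move: D; rewrite /Dl => /eqP; rewrite subr_eq0 => /eqP <-.
  by rewrite horner_comp /T hornerD hornerN hornerX hornerC -natr1 addrK IHk => <-.
apply: (@roots_geq_poly_eq0 _ _ [seq (i%:R : F) | i <- iota 0 (size u)]).
- by apply/allP => x /mapP [i _ ->]; rewrite /root Hk.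
- rewrite map_inj_uniq ?iota_uniq //; exact: natr_inj.
- by rewrite size_map size_iota.
Qed.

Lemma Suniq (u p : {poly F}) : Dl u = p -> u.[0] = 0 -> u = Sop p.
Proof.
move=> D u0; apply/eqP; rewrite -subr_eq0; apply/eqP; apply: Dl_uniq.
  by have := Dl_lin (-1) (Sop p) u; rewrite !scaleN1r SD D addrC => ->; rewrite addNr.
by rewrite hornerD hornerN u0 S0 subrr.
Qed.

Lemma Slin (c : F) (p q : {poly F}) : Sop (c *: p + q) = c *: Sop p + Sop q.
Proof.
symmetry; apply: Suniq; first by rewrite Dl_lin !SD.
by rewrite hornerD hornerZ !S0 mulr0 addr0.
Qed.

Lemma SK (q : {poly F}) : 'X * Sop q = Sop ('X * q + Sop q - q).
Proof.
apply: Suniq; last by rewrite hornerM hornerX mul0r.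
rewrite Dl_X SD.
have e : Sop q \Po T = Sop q - q.
  move: (SD q); rewrite /Dl; move: (Sop q \Po T) => B; move: (Sop q) => A <-.
  by rewrite opprB addrC subrK.
rewrite e; ring.
Qed.

Lemma S1 : Sop 1 = 'X.
Proof.
symmetry; apply: Suniq; last by rewrite hornerX.
by rewrite /Dl comp_polyX /T polyC1 opprB addrC subrK.
Qed.

Lemma Slead n : 1 + (Sop 'X^n)`_n.+1 != 0.
Proof.
have h : (size (Sop 'X^n) <= n.+2)%N by apply: (leq_trans (Ssize _)); rewrite size_polyXn.
have [_ D2] := Dl_main h; move: D2; rewrite SD coefXn /= eqxx => e.
apply/eqP => e2.
have : (n.+2%:R : F) = n.+1%:R * (1 + (Sop 'X^n)`_n.+1) by rewrite mulrDr mulr1 -e natr1.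
rewrite e2 mulr0 => /eqP; by rewrite ((pcharf0P _).1 hF).
Qed.

Lemma comp_exp (p r : {poly F}) k : (p ^+ k) \Po r = (p \Po r) ^+ k.
Proof. elim: k => [|k IH]; first by rewrite !expr0 -polyC1 comp_polyC. by rewrite !exprS comp_polyM IH. Qed.

Lemma Sop_compT (p : {poly F}) : Sop p \Po T = Sop p - p.
Proof.
move: (SD p); rewrite /Dl; move: (Sop p \Po T) => B; move: (Sop p) => A <-.
by rewrite opprB addrC subrK.
Qed.

Lemma ideal_main (I : {poly F} -> Prop) (al : F) :
  (forall p q, I p -> I q -> I (p + q)) ->
  (forall p q, I p -> I (q * p)) ->
  (forall p, I p -> I (Sop p)) ->
  ~ I 1 ->
  (exists k, I (('X - al%:P)^+k)) ->
  I ('X - al%:P).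
Proof.
move=> Iadd Imul IS I1 [k Ik].
have Isc c p : I p -> I (c *: p) by move=> Ip; rewrite -mul_polyC; apply: Imul.
have Ieqp p q : I p -> p %= q -> I q.
  move=> Ip /eqpP [[c1 c2] /= /andP [c1n c2n] e].
  have -> : q = (c2^-1 * c1) *: p by rewrite -scalerA e scalerA mulVf // scale1r.
  exact: Isc.
pose m j := ('X - al%:P)^+j.
pose Ib j := if excluded_middle_informative (I (m j)) then true else false.
have IbP j : Ib j = true <-> I (m j).
  rewrite /Ib; case: excluded_middle_informative => //.
have hex : exists j, Ib j by exists k; apply/IbP.
case: (ex_minnP hex) => j /IbP Ij jmin.
have dv p : I p -> m j %| p.
  move=> Ip; have [uv huv] := Bezoutp (m j) p.
  have Ig := Ieqp _ _ (Iadd _ _ (Imul _ uv.1 Ij) (Imul _ uv.2 Ip)) huv.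
  have /dvdp_exp_XsubCP [i le eq] : gcdp (m j) p %| m j by exact: dvdp_gcdl.
  have Ii := Ieqp _ _ Ig eq.
  have ji : (j <= i)%N by apply: jmin; apply/IbP.
  have eij : i = j by apply/eqP; rewrite eqn_leq le ji.
  by rewrite /m -eij -(eqp_dvdl _ eq) dvdp_gcdr.
have jn0 : j != 0%N.
  by apply/eqP => j0; apply: I1; move: Ij; rewrite /m j0 expr0.
have d1 := dv _ (IS _ Ij).
have d2 : m j %| Sop (m j) \Po T by rewrite Sop_compT dvdp_sub // dvdpp.
have d3 := dvdp_comp_poly ('X + 1) d2.
rewrite -comp_polyA in d3.
have eT : T \Po ('X + 1) = 'X by rewrite /T comp_polyB comp_polyX comp_polyC polyC1 addrK.
rewrite eT comp_polyXr /m comp_exp in d3.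
have e4 : ('X - al%:P) \Po ('X + 1) = 'X - (al - 1)%:P.
  rewrite comp_polyB comp_polyX comp_polyC polyCB polyC1; ring.
rewrite e4 in d3.
have cop : coprimep (m j) (('X - (al - 1)%:P)^+j).
  apply: coprimep_expl; apply: coprimep_expr; apply: coprimep_XsubC2.
  by rewrite addrAC subrr add0r oppr_eq0 oner_eq0.
have d4 : m j * ('X - (al - 1)%:P)^+j %| Sop (m j) by rewrite Gauss_dvdp // d1 d3.
have nz : Sop (m j) != 0.
  apply/eqP => e0; have := SD (m j); rewrite e0 /Dl comp_poly0 subrr => /esym /eqP.
  by rewrite /m expf_eq0 polyXsubC_eq0 andbF.
have := dvdp_leq nz d4.
rewrite size_mul ?expf_neq0 ?polyXsubC_eq0 // /m !size_exp_XsubC.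
move=> h; have h2 := leq_trans h (Ssize _).
rewrite size_exp_XsubC in h2.
have j1 : j = 1%N by move: jn0 h2; lia.
by move: Ij; rewrite /m j1 expr1.
Qed.

End PP.

Section GrBasics.
Variable F : fieldType.
Local Notation G := (seq nat -> F).

Definition gin (N : nat) (x : G) : Prop :=
  forall s, x s != 0 -> sorted ltn s /\ all (fun i => (i < N)%N) s.

Lemma gin_mono N N' x : (N <= N')%N -> gin N x -> gin N' x.
Proof.
move=> le h s /h [s1 s2]; split => //; apply: sub_all s2 => i /= hi.
exact: leq_trans hi le.
Qed.

Lemma gin_out N x s : gin N x -> ~~ sorted ltn s -> x s = 0.
Proof. by move=> h ns; apply/eqP; apply: contraNT ns => /h []. Qed.

Lemma size_mask2 (m : seq bool) (s : seq nat) : size m = size s ->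
  (size (mask m s) + size (mask (map negb m) s))%N = size s.
Proof.
elim: s m => [|x s IH] [|c m] //= [e]; case: c => /=; rewrite ?addSn ?addnS IH //.
Qed.

Lemma all_mask2 (p : pred nat) (m : seq bool) (s : seq nat) : size m = size s ->
  all p (mask m s) -> all p (mask (map negb m) s) -> all p s.
Proof.
elim: s m => [|x s IH] [|c m] //= [e]; case: c => /=.
  by move=> /andP [px h1] h2; rewrite px (IH m).
by move=> h1 /andP [px h2]; rewrite px (IH m).
Qed.

Lemma sum_nz (I : finType) (P : pred I) (f : I -> F) :
  \sum_(i | P i) f i != 0 -> exists i, P i /\ f i != 0.
Proof.
move=> h; case: (boolP [exists i, P i && (f i != 0)]) => [/existsP [i /andP [Pi fi]]|/existsPn H].
  by exists i.
rewrite big1 ?eqxx // in h => i Pi; by move: (H i); rewrite Pi /= negbK => /eqP.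
Qed.

Lemma mul_unsorted (x y : G) s : ~~ sorted ltn s -> gr_mul x y s = 0.
Proof. by move=> h; rewrite /gr_mul (negPf h). Qed.

Lemma gin_mul N (x y : G) : gin N x -> gin N y -> gin N (gr_mul x y).
Proof.
move=> hx hy s; rewrite /gr_mul; case: ifP => [so|_]; last by rewrite eqxx.
move=> /sum_nz [m [_ nz]].
have hxm : x (mask m s) != 0 by apply: contraNneq nz => ->; rewrite mulr0 mul0r.
have hym : y (mask (map negb m) s) != 0 by apply: contraNneq nz => ->; rewrite mulr0.
split => //; apply: (@all_mask2 _ m); first by rewrite size_tuple.
  by case: (hx _ hxm).
by case: (hy _ hym).
Qed.

Lemma gin_add N (x y : G) : gin N x -> gin N y -> gin N (gr_add x y).
Proof.
move=> hx hy s; rewrite /gr_add => h.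
case: (eqVneq (x s) 0) => [e|]; last exact: hx.
by apply: hy; move: h; rewrite e add0r.
Qed.

Lemma gin_scale N c (x : G) : gin N x -> gin N (gr_scale c x).
Proof. by move=> hx s; rewrite /gr_scale => h; apply: hx; apply: contraNneq h => ->; rewrite mulr0. Qed.

Lemma gin0 N : gin N (@gr0 F).
Proof. by move=> s; rewrite /gr0 eqxx. Qed.

Lemma gin1 N : gin N (@gr1 F).
Proof. by move=> [|i s] //; rewrite /gr1 eqxx. Qed.

Lemma gr_mulDr (x y z : G) c :
  gr_mul x (gr_add (gr_scale c y) z) = gr_add (gr_scale c (gr_mul x y)) (gr_mul x z).
Proof.
apply: functional_extensionality => s; rewrite /gr_mul /gr_add /gr_scale.
case: ifP => _; last by rewrite mulr0 addr0.
rewrite mulr_sumr -big_split /=; apply: eq_bigr => m _; ring.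
Qed.

Lemma gr_mulDl (x y z : G) c :
  gr_mul (gr_add (gr_scale c x) y) z = gr_add (gr_scale c (gr_mul x z)) (gr_mul y z).
Proof.
apply: functional_extensionality => s; rewrite /gr_mul /gr_add /gr_scale.
case: ifP => _; last by rewrite mulr0 addr0.
rewrite mulr_sumr -big_split /=; apply: eq_bigr => m _; ring.
Qed.

Lemma gr_mul0r (x : G) : gr_mul x (@gr0 F) = @gr0 F.
Proof.
apply: functional_extensionality => s; rewrite /gr_mul /gr0.
by case: ifP => _ //; rewrite big1 // => m _; rewrite mulr0.
Qed.

Lemma gr_mul0l (x : G) : gr_mul (@gr0 F) x = @gr0 F.
Proof.
apply: functional_extensionality => s; rewrite /gr_mul /gr0.
by case: ifP => _ //; rewrite big1 // => m _; rewrite mulr0 mul0r.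
Qed.

Lemma gr_mulZl (x y : G) c : gr_mul (gr_scale c x) y = gr_scale c (gr_mul x y).
Proof.
have := gr_mulDl x (@gr0 F) y c; rewrite gr_mul0l.
have -> : gr_add (gr_scale c x) (@gr0 F) = gr_scale c x.
  by apply: functional_extensionality => s; rewrite /gr_add /gr0 addr0.
move=> ->; apply: functional_extensionality => s; by rewrite /gr_add /gr0 addr0.
Qed.

Lemma gr_mulZr (x y : G) c : gr_mul x (gr_scale c y) = gr_scale c (gr_mul x y).
Proof.
have := gr_mulDr x y (@gr0 F) c; rewrite gr_mul0r.
have -> : gr_add (gr_scale c y) (@gr0 F) = gr_scale c y.
  by apply: functional_extensionality => s; rewrite /gr_add /gr0 addr0.
move=> ->; apply: functional_extensionality => s; by rewrite /gr_add /gr0 addr0.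
Qed.

Lemma gr_mul_sumr (x : G) (n : nat) (c : nat -> F) (f : nat -> G) :
  gr_mul x (fun t => \sum_(0 <= i < n) c i * f i t) =
  fun s => \sum_(0 <= i < n) c i * gr_mul x (f i) s.
Proof.
apply: functional_extensionality => s; rewrite /gr_mul.
case: ifP => _; last by rewrite big1 // => i _; rewrite mulr0.
under eq_bigr do rewrite mulr_sumr.
rewrite exchange_big /=; apply: eq_bigr => i _.
rewrite mulr_sumr; apply: eq_bigr => m _; ring.
Qed.

Definition t0 (n : nat) : n.-tuple bool := [tuple of nseq n false].

Lemma gr_inv_t0 n : gr_inv (t0 n) = 0%N.
Proof.
rewrite /gr_inv big1 // => i _; rewrite big1 // => j _.
by rewrite /t0 !tnth_nseq andbF.
Qed.

Lemma mul_split0 (x y : G) s : sorted ltn s ->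
  gr_mul x y s = x [::] * y s +
    \sum_(m : (size s).-tuple bool | m != t0 (size s))
       (-1) ^+ gr_inv m * x (mask m s) * y (mask (map negb m) s).
Proof.
move=> so; rewrite /gr_mul so (bigD1 (t0 (size s))) //=; congr (_ + _).
rewrite gr_inv_t0 expr0 mul1r /t0 /= mask_false map_nseq /= mask_true //.
Qed.

Lemma mask_nz n (m : n.-tuple bool) (s : seq nat) : size s = n -> m != t0 n -> (0 < size (mask m s))%N.
Proof.
move=> e nm; rewrite size_mask ?size_tuple // -has_count.
apply: contraNT nm => /hasPn h; apply/eqP; apply: eq_from_tnth => i.
rewrite /t0 tnth_nseq; apply/negbTE; exact: h (mem_tnth _ _).
Qed.

Lemma gr_mul1l N (y : G) : gin N y -> gr_mul (@gr1 F) y = y.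
Proof.
move=> hy; apply: functional_extensionality => s.
case: (boolP (sorted ltn s)) => so; last by rewrite mul_unsorted // (gin_out hy).
rewrite mul_split0 // big1 ?addr0 /gr1 ?mul1r // => m nm.
have := @mask_nz _ m s (erefl _) nm; case: (mask m s) => [|i l] //= _.
by rewrite /gr1 mulr0 mul0r.
Qed.

Definition t1 (n : nat) : n.-tuple bool := [tuple of nseq n true].

Lemma gr_mul1r N (x : G) : gin N x -> gr_mul x (@gr1 F) = x.
Proof.
move=> hx; apply: functional_extensionality => s.
case: (boolP (sorted ltn s)) => so; last by rewrite mul_unsorted // (gin_out hx).
rewrite /gr_mul so (bigD1 (t1 (size s))) //= big1 ?addr0.
  have -> : gr_inv (t1 (size s)) = 0%N.
    by rewrite /gr_inv big1 // => i _; rewrite big1 // => j _; rewrite /t1 !tnth_nseq andbF.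
  by rewrite expr0 mul1r /t1 /= mask_true // map_nseq /= mask_false /gr1 mulr1.
move=> m nm.
have : (0 < size (mask (map negb m) s))%N.
  rewrite size_mask ?size_map ?size_tuple // -has_count.
  apply: contraNT nm => /hasPn h; apply/eqP; apply: eq_from_tnth => i.
  rewrite /t1 tnth_nseq; have := h _ (map_f negb (mem_tnth i m)).
  by rewrite negbK.
by case: (mask (map negb m) s) => [|i l] //= _; rewrite /gr1 mulr0.
Qed.

Lemma gr_mul_nil (x y : G) : gr_mul x y [::] = x [::] * y [::].
Proof.
rewrite mul_split0 // big1 ?addr0 // => m nm.
by move: nm; rewrite (tuple0 m) (tuple0 (t0 0)) eqxx.
Qed.

End GrBasics.

Section Core.
Variable F : fieldType.
Hypothesis hF : [pchar F] =i pred0.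
Local Notation G := (seq nat -> F).
Variable b : option nat.
Variable P : G -> G.
Variable N : nat.
Hypothesis hN : forall x, gin N x -> @gr_in F b x.
Hypothesis ha : gin N (P (@gr1 F)).
Hypothesis Plin : forall c x y, @gr_in F b x -> @gr_in F b y ->
  P (gr_add (gr_scale c x) y) = gr_add (gr_scale c (P x)) (P y).
Hypothesis PRB1 : forall y, @gr_in F b y ->
  gr_mul (P (@gr1 F)) (P y) =
  P (gr_add (gr_add (gr_mul (P (@gr1 F)) y) (P y)) (gr_scale (-1) y)).

Let a := P (@gr1 F).

Fixpoint pw (k : nat) : G := if k is k'.+1 then gr_mul a (pw k') else @gr1 F.

Lemma gin_pw k : gin N (pw k).
Proof. elim: k => [|k IH] /=; [exact: gin1 | exact: gin_mul]. Qed.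

Definition ev (p : {poly F}) : G := fun s => \sum_(0 <= i < size p) p`_i * pw i s.

Lemma ev_big (p : {poly F}) n : (size p <= n)%N ->
  ev p = fun s => \sum_(0 <= i < n) p`_i * pw i s.
Proof.
move=> h; apply: functional_extensionality => s; rewrite /ev.
rewrite (@big_cat_nat _ _ _ (size p) 0 n) //= [X in _ = _ + X]big1_seq ?addr0 // => i /andP [_].
by rewrite mem_index_iota => /andP [hi _]; rewrite nth_default // mul0r.
Qed.

Lemma ev_lin c (p q : {poly F}) : ev (c *: p + q) = gr_add (gr_scale c (ev p)) (ev q).
Proof.
set n := maxn (size p) (size q).
have hp : (size p <= n)%N by rewrite leq_maxl.
have hq : (size q <= n)%N by rewrite leq_maxr.
have hpq : (size (c *: p + q)%R <= n)%N.
  apply: (leq_trans (size_polyD _ _)); rewrite geq_max hq andbT.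
  exact: leq_trans (size_scale_leq _ _) hp.
rewrite (ev_big hpq) (ev_big hp) (ev_big hq); apply: functional_extensionality => s.
rewrite /gr_add /gr_scale mulr_sumr -big_split /=; apply: eq_bigr => i _.
rewrite coefD coefZ; ring.
Qed.

Lemma ev0 : ev 0 = @gr0 F.
Proof. by apply: functional_extensionality => s; rewrite /ev size_poly0 big_geq. Qed.

Lemma gin_ev p : gin N (ev p).
Proof.
move=> s; rewrite /ev big_mkord => /sum_nz [i [_ nz]].
by apply: (@gin_pw i s); apply: contraNneq nz => ->; rewrite mulr0.
Qed.

Lemma in_ev p : @gr_in F b (ev p). Proof. exact: hN (@gin_ev p). Qed.

Lemma ev_X (p : {poly F}) : ev ('X * p) = gr_mul a (ev p).
Proof.
have h : (size ('X * p)%R <= (size p).+1)%N.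
  by apply: (leq_trans (size_polyMleq _ _)); rewrite size_polyX.
rewrite (ev_big h) /ev gr_mul_sumr; apply: functional_extensionality => s.
rewrite big_nat_recl //= coefXM /= mul0r add0r; apply: eq_bigr => i _.
by rewrite coefXM.
Qed.

Lemma ev1 : ev 1 = @gr1 F.
Proof.
apply: functional_extensionality => s.
by rewrite /ev size_poly1 big_nat1 coef1 mul1r.
Qed.

Lemma evX : ev 'X = a.
Proof. by rewrite -[X in ev X]mulr1 ev_X ev1 (gr_mul1r ha). Qed.

Local Notation S := (Sop hF).

Lemma in0 : @gr_in F b (@gr0 F). Proof. apply: hN; exact: gin0. Qed.

Lemma P0 : P (@gr0 F) = @gr0 F.
Proof.
have := Plin 1 in0 in0.
have -> : gr_add (gr_scale 1 (@gr0 F)) (@gr0 F) = @gr0 F.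
  by apply: functional_extensionality => s; rewrite /gr_add /gr_scale /gr0 mulr0 addr0.
move=> e; apply: functional_extensionality => s.
have := congr1 (fun f => f s) e; rewrite /gr_add /gr_scale mul1r /gr0 => /eqP.
by rewrite -subr_eq0 opprD addrA subrr add0r oppr_eq0 => /eqP.
Qed.

Lemma ev_add (p q : {poly F}) : ev (p + q) = gr_add (ev p) (ev q).
Proof.
rewrite -[p in LHS]scale1r ev_lin; congr gr_add.
by apply: functional_extensionality => s; rewrite /gr_scale mul1r.
Qed.

Lemma ev_scale c (p : {poly F}) : ev (c *: p) = gr_scale c (ev p).
Proof.
rewrite -[c *: p]addr0 ev_lin ev0.
by apply: functional_extensionality => s; rewrite /gr_add /gr0 addr0.
Qed.

Lemma ev_opp (p : {poly F}) : ev (- p) = gr_scale (-1) (ev p).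
Proof. by rewrite -scaleN1r ev_scale. Qed.

Definition Phi (p : {poly F}) := P (ev p) = ev (S p).

Lemma Phi_lin c (p q : {poly F}) : Phi p -> Phi q -> Phi (c *: p + q).
Proof.
have e : P (ev (c *: p + q)) = gr_add (gr_scale c (P (ev p))) (P (ev q)).
  by rewrite ev_lin Plin //; apply: in_ev.
by rewrite /Phi e Slin ev_lin => -> ->.
Qed.

Lemma S0' : S 0 = 0.
Proof. symmetry; apply: Suniq; by rewrite ?horner0 // /Dl comp_poly0 subrr. Qed.

Lemma Phi0 : Phi 0.
Proof. by rewrite /Phi S0' ev0 P0. Qed.

Lemma transfer n : forall p : {poly F}, (size p <= n)%N -> Phi p.
Proof.
elim: n => [|n IH] p hp.
  by move: hp; rewrite size_poly_leq0 => /eqP ->; exact: Phi0.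
have hX : Phi ('X^n).
  case: n IH hp => [|k] IH hp.
    by rewrite expr0 /Phi ev1 S1 evX.
  set q : {poly F} := 'X^k.
  have hq : Phi q by apply: IH; rewrite size_polyXn.
  set r : {poly F} := 'X * q + S q - q.
  have hr : Phi r.
    have e1 := PRB1 (in_ev q).
    rewrite /Phi in hq; rewrite hq -ev_X -/a -ev_X SK in e1.
    by rewrite /Phi /r ev_add ev_add ev_opp e1.
  set c := (S q)`_k.+1.
  set r' := r - (1 + c) *: 'X^(k.+1).
  have hr' : Phi r'.
    apply: IH; apply: size_le_coef.
      rewrite /r' /r; apply: (leq_trans (size_polyD _ _)); rewrite geq_max; apply/andP; split.
        apply: (leq_trans (size_polyD _ _)); rewrite geq_max; apply/andP; split.
          apply: (leq_trans (size_polyD _ _)); rewrite geq_max; apply/andP; split.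
            by apply: (leq_trans (size_polyMleq _ _)); rewrite size_polyX /q size_polyXn.
          by apply: (leq_trans (Ssize _ _)); rewrite /q size_polyXn.
        by rewrite size_polyN /q size_polyXn.
      by rewrite size_polyN; apply: (leq_trans (size_scale_leq _ _)); rewrite size_polyXn.
    rewrite /r' /r !coefB coefD coefXM /= /q !coefXn eqxx /= coefZ coefXn eqxx.
    by rewrite -/c mulr1 (gtn_eqF (ltnSn k)) subr0 subrr.
  have hc : Phi ((1 + c) *: 'X^(k.+1)).
    have -> : (1 + c) *: 'X^(k.+1) = (-1) *: r' + r by rewrite /r' scaleN1r opprB addrC subrK.
    exact: Phi_lin.
  have -> : 'X^(k.+1) = (1 + c)^-1 *: ((1 + c) *: 'X^(k.+1)) + 0.
    by rewrite addr0 scalerA mulVf ?scale1r // /c Slead.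
  exact: Phi_lin hc Phi0.
have -> : p = p`_n *: 'X^n + (p - p`_n *: 'X^n) by rewrite addrC subrK.
apply: Phi_lin hX (IH _ _); apply: size_le_coef.
  apply: (leq_trans (size_polyD _ _)); rewrite geq_max hp size_polyN.
  by apply: (leq_trans (size_scale_leq _ _)); rewrite size_polyXn.
by rewrite coefB coefZ coefXn eqxx mulr1 subrr.
Qed.

Lemma Ptransfer (p : {poly F}) : P (ev p) = ev (S p).
Proof. exact: (@transfer (size p)). Qed.

Definition Iev (p : {poly F}) := ev p = @gr0 F.

Lemma I_add p q : Iev p -> Iev q -> Iev (p + q).
Proof.
rewrite /Iev ev_add => -> ->.
by apply: functional_extensionality => s; rewrite /gr_add /gr0 addr0.
Qed.

Lemma I_mul p q : Iev p -> Iev (q * p).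
Proof.
move=> hp; elim/poly_ind: q => [|q c IH]; first by rewrite mul0r /Iev ev0.
have -> : (q * 'X + c%:P) * p = 'X * (q * p) + c *: p.
  by rewrite mulrDl mul_polyC mulrAC mulrC.
rewrite /Iev ev_add ev_X ev_scale IH hp gr_mul0r.
by apply: functional_extensionality => s; rewrite /gr_add /gr_scale /gr0 mulr0 addr0.
Qed.

Lemma I_S p : Iev p -> Iev (S p).
Proof. by rewrite /Iev -Ptransfer => ->; exact: P0. Qed.

Lemma I_1 : ~ Iev 1.
Proof.
rewrite /Iev ev1 => e; have := congr1 (fun f => f [::]) e.
by rewrite /gr1 /gr0 => /eqP; rewrite oner_eq0.
Qed.

Let al := a [::].

Lemma ev_XsubC (q : {poly F}) :
  ev (('X - al%:P) * q) = gr_add (gr_mul a (ev q)) (gr_scale (-al) (ev q)).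
Proof.
have -> : ('X - al%:P) * q = 'X * q + (-al) *: q.
  by rewrite mulrBl -mul_polyC polyCN mulNr.
by rewrite ev_add ev_X ev_scale.
Qed.

Lemma nil_step (y : G) k : gin N y -> (forall t, y t != 0 -> (k <= size t)%N) ->
  forall t, gr_add (gr_mul a y) (gr_scale (-al) y) t != 0 -> (k.+1 <= size t)%N.
Proof.
move=> gy hy t; rewrite /gr_add /gr_scale.
case: (boolP (sorted ltn t)) => so; last by rewrite mul_unsorted // (gin_out gy so) mulr0 addr0 eqxx.
rewrite mul_split0 // -/al.
set X := \sum_(_ | _) _.
have -> : al * y t + X + - al * y t = X by ring.
move=> /sum_nz [m [nm nz]].
have hym : y (mask (map negb m) t) != 0 by apply: contraNneq nz => ->; rewrite mulr0.
have h1 := hy _ hym.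
have h2 := @mask_nz _ m t (erefl _) nm.
have h3 := @size_mask2 m t (size_tuple m).
by rewrite -h3 -add1n; apply: leq_add.
Qed.

Lemma nil_pow k : forall t, ev (('X - al%:P)^+k) t != 0 -> (k <= size t)%N.
Proof.
elim: k => [|k IH] t //.
rewrite exprS ev_XsubC; apply: nil_step => //; exact: gin_ev.
Qed.

Lemma size_bound (t : seq nat) : sorted ltn t -> all (fun i => (i < N)%N) t -> (size t <= N)%N.
Proof.
move=> so al'; have u := sorted_uniq ltn_trans ltnn so.
rewrite -(size_iota 0 N); apply: uniq_leq_size => // i it.
by rewrite mem_iota /= add0n (allP al' i it).
Qed.

Lemma I_nil : Iev (('X - al%:P)^+N.+1).
Proof.
apply: functional_extensionality => t; apply/eqP; apply: contraT => nz.
have h1 := nil_pow nz.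
have [so alt] := @gin_ev _ t nz.
have := size_bound so alt; lia.
Qed.

Lemma a_scalar : a = gr_scale al (@gr1 F).
Proof.
have := ideal_main I_add (fun p q => @I_mul p q) I_S I_1 (ex_intro (fun k => Iev (('X - al%:P)^+k)) _ I_nil).
rewrite /Iev -[('X - al%:P)]mulr1 ev_XsubC ev1 (gr_mul1r ha) => e.
apply: functional_extensionality => s; have := congr1 (fun f => f s) e.
rewrite /gr_add /gr_scale /gr0 => /eqP; rewrite mulNr subr_eq0 => /eqP.
by [].
Qed.

Lemma core : a = @gr0 F \/ a = @gr1 F.
Proof.
have in1 : @gr_in F b (@gr1 F) by apply: hN; exact: gin1.
have e := PRB1 in1; rewrite -/a (gr_mul1r ha) in e.
have Psc c : P (gr_scale c (@gr1 F)) = gr_scale c a.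
  have := Plin c in1 in0; rewrite P0.
  have h x : gr_add x (@gr0 F) = x.
    by apply: functional_extensionality => s; rewrite /gr_add /gr0 addr0.
  by rewrite !h.
have E : gr_add (gr_add a a) (gr_scale (-1) (@gr1 F)) = gr_scale (2 * al - 1) (@gr1 F).
  rewrite [in LHS]a_scalar; apply: functional_extensionality => s.
  rewrite /gr_add /gr_scale; ring.
rewrite E Psc in e.
have := congr1 (fun f => f [::]) e; rewrite gr_mul_nil /gr_scale -/al => e2.
have : al * (al - 1) = 0.
  have -> : al * (al - 1) = (2 * al - 1) * al - al * al by ring.
  by rewrite e2 subrr.
move/eqP; rewrite mulf_eq0 => /orP [] /eqP h.
  left; rewrite a_scalar h; apply: functional_extensionality => s; by rewrite /gr_scale mul0r.
right; rewrite a_scalar; move/eqP: h; rewrite subr_eq0 => /eqP ->.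
by apply: functional_extensionality => s; rewrite /gr_scale mul1r.
Qed.

End Core.

Unset Implicit Arguments.

Section GrIn.
Variable F : fieldType.
Variable b : option nat.
Local Notation G := (seq nat -> F).

Definition bnd (N : nat) : Prop := match b with Some n => is_true (N <= n)%N | None => True end.

Lemma gr_in_gin (x : G) : @gr_in F b x <-> exists N, bnd N /\ gin N x.
Proof. by []. Qed.

Lemma gr_in2 (x y : G) : @gr_in F b x -> @gr_in F b y ->
  exists N, bnd N /\ gin N x /\ gin N y.
Proof.
move=> [N1 [b1 h1]] [N2 [b2 h2]]; exists (maxn N1 N2); split; last split.
- by rewrite /bnd; case: b b1 b2 => // n; rewrite geq_max => -> ->.
- by apply: (gin_mono (leq_maxl _ _)).
- by apply: (gin_mono (leq_maxr _ _)).
Qed.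

Lemma gr_in_mul (x y : G) : @gr_in F b x -> @gr_in F b y -> @gr_in F b (gr_mul x y).
Proof. move=> hx hy; have [N [bN [gx gy]]] := gr_in2 _ _ hx hy; exists N; split => //; exact: gin_mul. Qed.

Lemma gr_in_add (x y : G) : @gr_in F b x -> @gr_in F b y -> @gr_in F b (gr_add x y).
Proof. move=> hx hy; have [N [bN [gx gy]]] := gr_in2 _ _ hx hy; exists N; split => //; exact: gin_add. Qed.

Lemma gr_in_scale c (x : G) : @gr_in F b x -> @gr_in F b (gr_scale c x).
Proof. move=> [N [bN gx]]; exists N; split => //; exact: gin_scale. Qed.

Lemma gr_in0 : @gr_in F b (@gr0 F).
Proof. exists 0%N; split; [by rewrite /bnd; case: b | exact: gin0]. Qed.

Lemma gr_in1 : @gr_in F b (@gr1 F).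
Proof. exists 0%N; split; [by rewrite /bnd; case: b | exact: gin1]. Qed.

Lemma gr_mul1l' (y : G) : @gr_in F b y -> gr_mul (@gr1 F) y = y.
Proof. by move=> [N [_ g]]; exact: gr_mul1l g. Qed.

End GrIn.

Theorem corollary4 (F : fieldType) (b : option nat) (lam : F)
  (R : (seq nat -> F) -> (seq nat -> F)) :
  [pchar F] =i pred0 -> lam != 0 -> is_RB b lam R ->
  splitting b lam R /\
  (R (@gr1 F) = @gr0 F \/ R (@gr1 F) = gr_scale (- lam) (@gr1 F)).
Proof.
move=> hF hlam [Rin [Rlin RRB]].
have fe := functional_extensionality.
have in0 := gr_in0 F b; have in1 := gr_in1 F b.
have R0 : R (@gr0 F) = @gr0 F.
  have := Rlin 1 _ _ in0 in0.
  have -> : gr_add (gr_scale 1 (@gr0 F)) (@gr0 F) = @gr0 F.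
    by apply: fe => s; rewrite /gr_add /gr_scale /gr0 mulr0 addr0.
  move=> e; apply: fe => s.
  have := congr1 (fun f => f s) e; rewrite /gr_add /gr_scale mul1r /gr0 => /eqP.
  by rewrite -subr_eq0 opprD addrA subrr add0r oppr_eq0 => /eqP.
have Rsc c x : @gr_in F b x -> R (gr_scale c x) = gr_scale c (R x).
  move=> hx; have := Rlin c _ _ hx in0; rewrite R0.
  have h (z : seq nat -> F) : gr_add z (@gr0 F) = z by apply: fe => s; rewrite /gr_add /gr0 addr0.
  by rewrite !h.
have Radd x y : @gr_in F b x -> @gr_in F b y -> R (gr_add x y) = gr_add (R x) (R y).
  move=> hx hy; have := Rlin 1 _ _ hx hy.
  have h (z : seq nat -> F) : gr_scale 1 z = z by apply: fe => s; rewrite /gr_scale mul1r.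
  by rewrite !h.
pose k := - lam^-1.
have klam : k * lam = -1 by rewrite /k mulNr mulVf.
pose P x := gr_scale k (R x).
have [N [bN gR1]] := Rin _ in1.
have hN x : gin N x -> @gr_in F b x by move=> g; exists N; split.
have ha : gin N (P (@gr1 F)) by exact: gin_scale.
have Plin c x y : @gr_in F b x -> @gr_in F b y ->
    P (gr_add (gr_scale c x) y) = gr_add (gr_scale c (P x)) (P y).
  move=> hx hy; rewrite /P Rlin //; apply: fe => s; rewrite /gr_add /gr_scale; ring.
have PRB1 y : @gr_in F b y ->
    gr_mul (P (@gr1 F)) (P y) =
    P (gr_add (gr_add (gr_mul (P (@gr1 F)) y) (P y)) (gr_scale (-1) y)).
  move=> hy.
  have e := RRB _ _ in1 hy.
  rewrite (gr_mul1l' _ _ _ (Rin _ hy)) (gr_mul1l' _ _ _ hy) in e.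
  set W := gr_add (gr_add (gr_mul (R (@gr1 F)) y) (R y)) (gr_scale lam y) in e.
  have hW : @gr_in F b W.
    apply: gr_in_add; [apply: gr_in_add => //; [apply: gr_in_mul => //; exact: Rin | exact: Rin] | exact: gr_in_scale].
  have -> : gr_add (gr_add (gr_mul (P (@gr1 F)) y) (P y)) (gr_scale (-1) y) = gr_scale k W.
    rewrite /P gr_mulZl; apply: fe => s; rewrite /W /gr_add /gr_scale.
    rewrite -klam; ring.
  by rewrite /P gr_mulZl gr_mulZr e Rsc.
have knz : k != 0 by rewrite /k oppr_eq0 invr_eq0.
have mlk : - lam * k = 1 by rewrite /k mulrN mulNr opprK mulfV.
have hR1 : R (@gr1 F) = @gr0 F \/ R (@gr1 F) = gr_scale (- lam) (@gr1 F).
  have [P1|P1] := core hF hN ha Plin PRB1.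
    left; apply: fe => s; have := congr1 (fun f => f s) P1.
    rewrite /P /gr_scale /gr0 => /eqP; rewrite mulf_eq0 (negPf knz) => /eqP.
    by [].
  right; apply: fe => s; have := congr1 (fun f => f s) P1.
  rewrite /P /gr_scale => <-; by rewrite mulrA mlk mul1r.
have Ridem y : @gr_in F b y -> R (R y) = gr_scale (- lam) (R y).
  move=> hy; have e := RRB _ _ in1 hy.
  rewrite (gr_mul1l' _ _ _ (Rin _ hy)) (gr_mul1l' _ _ _ hy) in e.
  case: hR1 => h1; rewrite h1 in e.
    rewrite !gr_mul0l in e.
    have E : gr_add (gr_add (@gr0 F) (R y)) (gr_scale lam y) = gr_add (R y) (gr_scale lam y).
      by apply: fe => s; rewrite /gr_add /gr0 add0r.
    rewrite E (Radd _ _ (Rin _ hy) (gr_in_scale _ _ _ _ hy)) (Rsc _ _ hy) in e.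
    apply: fe => s; have := congr1 (fun f => f s) e.
    rewrite /gr_add /gr_scale /gr0 => /eqP; rewrite eq_sym addr_eq0 => /eqP ->.
    by rewrite mulNr.
  rewrite !gr_mulZl (gr_mul1l' _ _ _ (Rin _ hy)) (gr_mul1l' _ _ _ hy) in e.
  have E : gr_add (gr_add (gr_scale (- lam) y) (R y)) (gr_scale lam y) = R y.
    by apply: fe => s; rewrite /gr_add /gr_scale; ring.
  by rewrite E in e.
split; last exact: hR1.
pose A1 x := @gr_in F b x /\ R x = @gr0 F.
pose A2 x := @gr_in F b x /\ R x = gr_scale (- lam) x.
have sc0 c : gr_scale c (@gr0 F) = @gr0 F by apply: fe => s; rewrite /gr_scale /gr0 mulr0.
exists A1, A2; split; last split; last split; last split.
- split; first by move=> x [].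
  split; first by split.
  split.
    move=> c x y [hx Rx] [hy Ry]; split; first by apply: gr_in_add => //; exact: gr_in_scale.
    rewrite Rlin // Rx Ry; apply: fe => s; by rewrite /gr_add /gr_scale /gr0 mulr0 addr0.
  move=> x y [hx Rx] [hy Ry]; split; first exact: gr_in_mul.
  have e := RRB _ _ hx hy; rewrite Rx Ry gr_mul0l gr_mul0l gr_mul0r in e.
  have E : gr_add (gr_add (@gr0 F) (@gr0 F)) (gr_scale lam (gr_mul x y)) = gr_scale lam (gr_mul x y).
    by apply: fe => s; rewrite /gr_add /gr0 !add0r.
  rewrite E Rsc in e; last exact: gr_in_mul.
  apply: fe => s; have := congr1 (fun f => f s) e.
  rewrite /gr_scale /gr0 => /esym /eqP; rewrite mulf_eq0 (negPf hlam) /= => /eqP.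
  by [].
- split; first by move=> x [].
  split; first by split; rewrite ?R0 ?sc0.
  split.
    move=> c x y [hx Rx] [hy Ry]; split; first by apply: gr_in_add => //; exact: gr_in_scale.
    rewrite Rlin // Rx Ry; apply: fe => s; rewrite /gr_add /gr_scale; ring.
  move=> x y [hx Rx] [hy Ry]; split; first exact: gr_in_mul.
  have e := RRB _ _ hx hy; rewrite Rx Ry !gr_mulZl !gr_mulZr in e.
  have E : gr_add (gr_add (gr_scale (- lam) (gr_mul x y)) (gr_scale (- lam) (gr_mul x y)))
             (gr_scale lam (gr_mul x y)) = gr_scale (- lam) (gr_mul x y).
    by apply: fe => s; rewrite /gr_add /gr_scale; ring.
  rewrite E Rsc in e; last exact: gr_in_mul.
  apply: fe => s; have := congr1 (fun f => f s) e.
  rewrite /gr_scale => e2.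
  apply: (mulfI (_ : - lam != 0)); first by rewrite oppr_eq0.
  by rewrite -e2; ring.
- move=> x hx.
  have hRx := Rin _ hx.
  exists (gr_add x (gr_scale (-1) (P x))), (P x).
  have hPx : @gr_in F b (P x) by exact: gr_in_scale.
  have RPx : R (P x) = gr_scale (- lam) (P x).
    rewrite /P Rsc // Ridem //; apply: fe => s; rewrite /gr_scale; ring.
  split; last split.
  + split; first by apply: gr_in_add => //; exact: gr_in_scale.
    rewrite Radd ?Rsc //; last exact: gr_in_scale.
    rewrite Ridem //; apply: fe => s; rewrite /gr_add /gr_scale /gr0.
    have -> : R x s + -1 * (k * (- lam * R x s)) = R x s - (- lam * k) * R x s by ring.
    by rewrite mlk mul1r subrr.
  + by split.
  + by apply: fe => s; rewrite /gr_add /gr_scale; ring.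
- move=> x [hx Rx] [_ Rx']; rewrite Rx in Rx'.
  apply: fe => s; have := congr1 (fun f => f s) Rx'.
  rewrite /gr_scale /gr0 => /esym /eqP; rewrite mulf_eq0 oppr_eq0 (negPf hlam) /= => /eqP.
  by [].
- move=> a1 a2 [h1 R1'] [h2 R2']; rewrite Radd // R1' R2'.
  by apply: fe => s; rewrite /gr_add /gr0 add0r.
Qed.
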